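(* Let $0<\kappa<1$ and $\lambda=\sqrt{1-\kappa^2}$. For $\phi$ near $0$ define $$u(\phi)=\int_0^{\phi} F\!\left(\tfrac14,\tfrac34;\tfrac12;\kappa^2\sin^2\theta\right)\,\mathrm{d}\theta ,$$ let $u\mapsto\phi(u)$ be the local inverse near $0$ with $\phi(0)=0$, let $\psi=\psi(u)$ be defined near $u=0$ with $\psi(0)=0$ and $\sin\psi=\kappa\sin\phi$, and set $d=\cos\psi$. Then $d$ satisfies the differential equation $$(d')^2=2\,(1-d)\,(d^2-\lambda^2),$$ where $'$ denotes differentiation with respect to $u$.
   Context: $F(a,b;c;z)$ denotes the Gauss hypergeometric function ${}_2F_1(a,b;c;z)$. *)

(* Defs.v *)
From Stdlib Require Import Reals Factorial.
From Coquelicot Require Import Coquelicot.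
Open Scope R_scope.

Fixpoint poch (a : R) (n : nat) : R :=
  match n with
  | O => 1
  | S m => poch a m * (a + INR m)
  end.

Definition hyp2F1 (a b c z : R) : R :=
  Series (fun n => poch a n * poch b n / (poch c n * INR (Factorial.fact n)) * z ^ n).

Definition u_of (kappa phi : R) : R :=
  RInt (fun theta => hyp2F1 (1/4) (3/4) (1/2) (kappa ^ 2 * (sin theta) ^ 2)) 0 phi.

(* Main.v *)
Require Import Defs.
From Stdlib Require Import Reals Lra Lia Factorial Ranalysis5.
From Coquelicot Require Import Coquelicot.
Open Scope R_scope.

Definition a_bin (m : nat) : R := poch (1/2) m / INR (fact m).

Lemma a_bin_S m : a_bin (S m) = a_bin m * (1/2 + INR m) / INR (S m).
Proof.
  unfold a_bin.
  replace (poch (1/2) (S m)) with (poch (1/2) m * (1/2 + INR m)) by reflexivity.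
  rewrite fact_simpl, mult_INR. field.
  split; [apply INR_fact_neq_0 | apply not_0_INR; lia].
Qed.

Lemma a_bin_0 : a_bin 0 = 1.
Proof. unfold a_bin; simpl. field. Qed.

Lemma a_bin_bnd m : 0 < a_bin m <= 1.
Proof.
  induction m as [|m IH].
  - rewrite a_bin_0; lra.
  - rewrite a_bin_S, S_INR. assert (0 <= INR m) by apply pos_INR.
    split.
    + apply Rdiv_lt_0_compat; [apply Rmult_lt_0_compat|]; lra.
    + apply Rmult_le_reg_r with (INR m + 1); [lra|].
      unfold Rdiv; rewrite Rmult_assoc, Rinv_l by lra. nra.
Qed.

Lemma a_bin_rad w : Rabs w < 1 -> Rbar_lt (Rabs w) (CV_radius a_bin).
Proof.
  intros Hw.
  set (r := (Rabs w + 1) / 2).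
  assert (Hr0 : 0 <= r) by (unfold r; pose proof (Rabs_pos w); lra).
  assert (Hd : CV_disk a_bin r).
  { unfold CV_disk. apply (@ex_series_le R_AbsRing R_CompleteNormedModule _ (fun n => r ^ n)).
    - intros n. change norm with Rabs. simpl. rewrite Rabs_Rabsolu, Rabs_mult.
      rewrite (Rabs_right (r ^ n)) by (apply Rle_ge, pow_le; lra).
      rewrite Rabs_right by (left; apply a_bin_bnd).
      pose proof (a_bin_bnd n). pose proof (pow_le r n Hr0). nra.
    - apply ex_series_geom. rewrite Rabs_right by lra. unfold r; lra. }
  apply Rbar_lt_le_trans with (Finite r).
  - simpl. unfold r; lra.
  - destruct (Lub_Rbar_correct (CV_disk a_bin)) as [Hub _]. apply Hub, Hd.
Qed.

Lemma a_bin_ode w : Rabs w < 1 ->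
  (1 - w) * PSeries (PS_derive a_bin) w = PSeries a_bin w / 2.
Proof.
  intros Hw. pose proof (a_bin_rad w Hw) as Hr.
  assert (E1 : ex_pseries (PS_derive a_bin) w) by (apply ex_pseries_derive; auto).
  assert (E2 : ex_pseries (PS_incr_1 (PS_derive a_bin)) w) by (apply ex_pseries_incr_1; auto).
  replace ((1 - w) * PSeries (PS_derive a_bin) w) with
    (PSeries (PS_derive a_bin) w - PSeries (PS_incr_1 (PS_derive a_bin)) w)
    by (rewrite PSeries_incr_1; ring).
  rewrite <- PSeries_minus by auto.
  replace (PSeries a_bin w / 2) with (PSeries (PS_scal (1/2) a_bin) w)
    by (rewrite PSeries_scal; field).
  apply PSeries_ext. intros n. unfold PS_minus, PS_scal, PS_derive.
  change plus with Rplus. change opp with Ropp. change scal with Rmult.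
  destruct n as [|m].
  - unfold PS_incr_1. rewrite a_bin_S, a_bin_0. simpl. unfold zero, mult; simpl. field.
  - unfold PS_incr_1. rewrite (a_bin_S (S m)).
    rewrite !S_INR. change mult with Rmult. field. pose proof (pos_INR m). lra.
Qed.

Lemma h_der x : Rabs x < 1 ->
  is_derive (fun t => PSeries a_bin t * sqrt (1 - t)) x 0.
Proof.
  intros Hx. pose proof (a_bin_rad x Hx) as Hr.
  assert (H1x : 0 < 1 - x) by (apply Rabs_def2 in Hx; lra).
  assert (Hs : is_derive (fun t => sqrt (1 - t)) x (- / (2 * sqrt (1 - x)))).
  { auto_derive. lra. unfold Rminus. ring. }
  pose proof (is_derive_mult _ _ _ _ _ (is_derive_PSeries _ _ Hr) Hs Rmult_comm) as Hm.
  change mult with Rmult in Hm. change plus with Rplus in Hm.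
  replace 0 with (PSeries (PS_derive a_bin) x * sqrt (1 - x) +
     PSeries a_bin x * - / (2 * sqrt (1 - x))); [exact Hm|].
  pose proof (a_bin_ode x Hx) as Ho.
  pose proof (sqrt_lt_R0 _ H1x) as Hsp.
  pose proof (sqrt_sqrt (1 - x) (Rlt_le _ _ H1x)) as Hss.
  apply Rmult_eq_reg_r with (2 * sqrt (1 - x)); [|lra].
  field_simplify; [|lra]. 
  rewrite pow2_sqrt by lra. lra.
Qed.

Lemma a_bin_closed w : Rabs w < 1 -> PSeries a_bin w = / sqrt (1 - w).
Proof.
  intros Hw.
  set (h := fun t => PSeries a_bin t * sqrt (1 - t)).
  set (r := (Rabs w + 1) / 2).
  pose proof (Rabs_pos w) as Hw0.
  assert (Hin : forall x, - r <= x <= r -> Rabs x < 1).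
  { intros x Hx. unfold r in Hx. apply Rabs_def1; lra. }
  assert (pr : forall x, - r < x < r -> derivable_pt h x).
  { intros x Hx. exists 0. apply is_derive_Reals, h_der, Hin; lra. }
  assert (Hc : constant_D_eq h (fun x => - r <= x <= r) (h (- r))).
  { apply (null_derivative_loc h (-r) r pr).
    - intros x Hx. apply derivable_continuous_pt. exists 0.
      apply is_derive_Reals, h_der, Hin; lra.
    - intros x P. apply derive_pt_eq_0. apply is_derive_Reals, h_der, Hin; lra. }
  assert (Hw1 : h w = h 0).
  { pose proof (Rle_abs w); pose proof (Rle_abs (-w)); rewrite Rabs_Ropp in *.
    rewrite (Hc w), (Hc 0); auto; unfold r; split; lra. }
  unfold h in Hw1. rewrite PSeries_0, a_bin_0, Rminus_0_r, sqrt_1 in Hw1.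
  assert (H1w : 0 < 1 - w) by (apply Rabs_def2 in Hw; lra).
  pose proof (sqrt_lt_R0 _ H1w).
  apply Rmult_eq_reg_r with (sqrt (1 - w)); [|lra].
  rewrite Hw1. field. lra.
Qed.

Lemma poch_half_pos n : 0 < poch (1/2) n.
Proof.
  induction n as [|n IH]; simpl; [lra|].
  pose proof (pos_INR n). apply Rmult_lt_0_compat; lra.
Qed.

Lemma hyp_coef n : poch (1/4) n * poch (3/4) n / (poch (1/2) n * INR (fact n)) = a_bin (2 * n).
Proof.
  induction n as [|n IH].
  - simpl. unfold a_bin. simpl. field.
  - replace (2 * S n)%nat with (S (S (2 * n))) by lia.
    rewrite !a_bin_S, <- IH.
    replace (poch (1/4) (S n)) with (poch (1/4) n * (1/4 + INR n)) by reflexivity.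
    replace (poch (3/4) (S n)) with (poch (3/4) n * (3/4 + INR n)) by reflexivity.
    replace (poch (1/2) (S n)) with (poch (1/2) n * (1/2 + INR n)) by reflexivity.
    rewrite fact_simpl, mult_INR.
    replace (INR (S (2 * n))) with (2 * INR n + 1) by (rewrite S_INR, mult_INR; simpl; ring).
    replace (INR (S (S (2 * n)))) with (2 * INR n + 2) by (rewrite !S_INR, mult_INR; simpl; ring).
    rewrite S_INR.
    pose proof (pos_INR n). pose proof (poch_half_pos n). pose proof (INR_fact_neq_0 n).
    rewrite mult_INR; simpl INR. field. repeat split; lra.
Qed.

Lemma a_bin_ex z : Rabs z < 1 -> forall f : nat -> nat, ex_pseries (fun n => a_bin (f n)) z.
Proof.
  intros Hz f. apply CV_disk_correct. unfold CV_disk.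
  apply (@ex_series_le R_AbsRing R_CompleteNormedModule _ (fun n => (Rabs z) ^ n)).
  - intros n. change norm with Rabs. simpl. rewrite Rabs_Rabsolu, Rabs_mult.
    rewrite <- RPow_abs.
    rewrite (Rabs_right (a_bin _)) by (left; apply a_bin_bnd).
    pose proof (a_bin_bnd (f n)). pose proof (pow_le (Rabs z) n (Rabs_pos _)). nra.
  - apply ex_series_geom. rewrite Rabs_Rabsolu. auto.
Qed.

Lemma hyp_closed w : Rabs w < 1 ->
  hyp2F1 (1/4) (3/4) (1/2) (w ^ 2) = (/ sqrt (1 - w) + / sqrt (1 + w)) / 2.
Proof.
  intros Hw.
  assert (Hw2 : Rabs (w ^ 2) < 1).
  { rewrite <- RPow_abs. pose proof (Rabs_pos w). simpl. nra. }
  pose proof (a_bin_ex _ Hw2) as Hex.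
  unfold hyp2F1.
  change (Series (fun n => poch (1/4) n * poch (3/4) n / (poch (1/2) n * INR (fact n)) * (w ^ 2) ^ n))
    with (PSeries (fun n => poch (1/4) n * poch (3/4) n / (poch (1/2) n * INR (fact n))) (w ^ 2)).
  rewrite (PSeries_ext _ (fun n => a_bin (2 * n))) by apply hyp_coef.
  pose proof (PSeries_odd_even a_bin w (Hex _) (Hex (fun n => 2 * n + 1)%nat)) as Hp.
  pose proof (PSeries_odd_even a_bin (- w)) as Hm.
  replace ((- w) ^ 2) with (w ^ 2) in Hm by ring.
  specialize (Hm (Hex _) (Hex (fun n => 2 * n + 1)%nat)).
  rewrite a_bin_closed in Hp by auto.
  rewrite a_bin_closed in Hm by (rewrite Rabs_Ropp; auto).
  replace (1 - - w) with (1 + w) in Hm by ring.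
  lra.
Qed.

Definition f_int (k t : R) : R := (/ sqrt (1 - k * sin t) + / sqrt (1 + k * sin t)) / 2.

Lemma ks_bnd k t : 0 < k -> k < 1 -> Rabs (k * sin t) < 1.
Proof.
  intros H0 H1. rewrite Rabs_mult, Rabs_right by lra.
  pose proof (Rabs_le (sin t) 1 (SIN_bound t)) as _ .
  assert (Rabs (sin t) <= 1) by (apply Rabs_le; apply SIN_bound).
  pose proof (Rabs_pos (sin t)). nra.
Qed.

Lemma integrand_eq k t : 0 < k -> k < 1 ->
  hyp2F1 (1/4) (3/4) (1/2) (k ^ 2 * sin t ^ 2) = f_int k t.
Proof.
  intros H0 H1. replace (k ^ 2 * sin t ^ 2) with ((k * sin t) ^ 2) by ring.
  rewrite hyp_closed by (apply ks_bnd; auto). reflexivity.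
Qed.

Lemma f_int_cont k t : 0 < k -> k < 1 -> continuous (f_int k) t.
Proof.
  intros H0 H1. apply (@ex_derive_continuous R_AbsRing R_NormedModule). unfold f_int.
  pose proof (ks_bnd k t H0 H1) as Hb. apply Rabs_def2 in Hb.
  auto_derive. repeat split; try lra;
  apply Rgt_not_eq, sqrt_lt_R0; lra.
Qed.

Lemma f_int_pos k t : 0 < k -> k < 1 -> 0 < f_int k t.
Proof.
  intros H0 H1. unfold f_int.
  pose proof (ks_bnd k t H0 H1) as Hb. apply Rabs_def2 in Hb.
  assert (0 < sqrt (1 - k * sin t)) by (apply sqrt_lt_R0; lra).
  assert (0 < sqrt (1 + k * sin t)) by (apply sqrt_lt_R0; lra).
  pose proof (Rinv_0_lt_compat _ H). pose proof (Rinv_0_lt_compat _ H2). lra.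
Qed.

Lemma u_of_eq k x : 0 < k -> k < 1 -> u_of k x = RInt (f_int k) 0 x.
Proof.
  intros H0 H1. unfold u_of. apply RInt_ext. intros t _. apply integrand_eq; auto.
Qed.

Lemma u_der k x : 0 < k -> k < 1 -> is_derive (u_of k) x (f_int k x).
Proof.
  intros H0 H1.
  apply (is_derive_ext (fun y => RInt (f_int k) 0 y)).
  { intros t. symmetry. apply u_of_eq; auto. }
  apply (is_derive_RInt (f_int k) (fun y => RInt (f_int k) 0 y) 0).
  - apply filter_forall. intros b. apply (@RInt_correct R_CompleteNormedModule).
    apply (@ex_RInt_continuous R_CompleteNormedModule). intros z _. apply f_int_cont; auto.
  - apply f_int_cont; auto.
Qed.

Lemma u_incr k a b : 0 < k -> k < 1 -> a < b -> u_of k a < u_of k b.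
Proof.
  intros H0 H1 Hab. rewrite !u_of_eq by auto.
  assert (Hex : forall p q, ex_RInt (f_int k) p q).
  { intros p q. apply (@ex_RInt_continuous R_CompleteNormedModule). intros z _. apply f_int_cont; auto. }
  rewrite <- (RInt_Chasles (f_int k) 0 a b) by auto.
  change plus with Rplus.
  assert (0 < RInt (f_int k) a b).
  { apply RInt_gt_0; auto. intros; apply f_int_pos; auto. intros; apply f_int_cont; auto. }
  lra.
Qed.

Theorem theorem3 (kappa delta : R) (phi psi : R -> R) :
  0 < kappa -> kappa < 1 -> 0 < delta ->
  phi 0 = 0 ->
  (forall v, Rabs v < delta -> u_of kappa (phi v) = v) ->
  psi 0 = 0 ->
  (forall v, Rabs v < delta -> continuous psi v) ->
  (forall v, Rabs v < delta -> sin (psi v) = kappa * sin (phi v)) ->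
  let lambda := sqrt (1 - kappa ^ 2) in
  let d := fun v => cos (psi v) in
  forall v, Rabs v < delta ->
    ex_derive d v /\
    (Derive d v) ^ 2 = 2 * (1 - d v) * ((d v) ^ 2 - lambda ^ 2).
Proof.
  intros Hk0 Hk1 Hd Hphi0 Hinv Hpsi0 Hcont Hsin lambda d v Hv.
  set (u := u_of kappa).
  set (f := f_int kappa).
  assert (Uinc : forall a b, a < b -> u a < u b) by (intros; apply u_incr; auto).
  assert (Urev : forall a b, u a <= u b -> a <= b).
  { intros a b H. destruct (Rle_or_lt a b) as [|Hba]; auto.
    apply Uinc in Hba. lra. }
  assert (Uder : forall x, is_derive u x (f x)) by (intros; apply u_der; auto).
  assert (Uderp : forall a, derivable_pt u a).
  { intros a. exists (f a). apply is_derive_Reals, Uder. }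
  assert (Ucont : forall a, continuity_pt u a).
  { intros a. apply derivable_continuous_pt, Uderp. }
  set (eps := (delta - Rabs v) / 2).
  assert (Heps : 0 < eps) by (unfold eps; lra).
  set (lb := v - eps). set (ub := v + eps).
  assert (Hin : forall x, lb <= x <= ub -> Rabs x < delta).
  { intros x Hx. pose proof (Rle_abs v). pose proof (Rle_abs (-v)). rewrite Rabs_Ropp in *.
    apply Rabs_def1; unfold lb, ub, eps in Hx; lra. }
  assert (Hlbub : lb < ub) by (unfold lb, ub; lra).
  assert (Hplu : phi lb < phi ub).
  { destruct (Rle_or_lt (phi ub) (phi lb)) as [H|H]; auto.
    assert (u (phi ub) <= u (phi lb)).
    { destruct H as [H|H]; [left; apply Uinc; auto| rewrite H; lra]. }
    unfold u in H0. rewrite !Hinv in H0 by (apply Hin; lra). lra. }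
  assert (Hcomp : forall x, lb <= x <= ub -> comp u phi x = id x).
  { intros x Hx. unfold comp, id, u. apply Hinv, Hin, Hx. }
  assert (Hmono : forall x, lb <= x <= ub -> phi lb <= phi x <= phi ub).
  { intros x Hx. split; apply Urev; unfold u; rewrite !Hinv by (apply Hin; lra); lra. }
  assert (Hphic : continuity_pt phi v).
  { apply (continuity_pt_recip_interv u phi (phi lb) (phi ub) Hplu).
    - intros x y _ Hxy _. apply Uinc, Hxy.
    - intros x H1 H2. apply Hcomp. unfold u in H1, H2.
      rewrite Hinv in H1, H2 by (apply Hin; lra). lra.
    - intros x H1 H2. unfold u in H1, H2.
      rewrite Hinv in H1, H2 by (apply Hin; lra). apply Hmono; lra.
    - intros a _. apply Ucont.
    - unfold u. rewrite !Hinv by (apply Hin; lra). unfold lb, ub; lra. }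
  assert (Hvin : lb < v < ub) by (unfold lb, ub; lra).
  assert (Hpinc : phi lb <= phi v <= phi ub) by (apply Hmono; lra).
  assert (Hphid : derivable_pt_lim phi v (1 / f (phi v))).
  { pose proof (derivable_pt_lim_recip_interv u phi lb ub v (fun a _ => Uderp a) Hphic Hlbub Hvin Hpinc Hcomp) as Hr.
    assert (E : derive_pt u (phi v) (Uderp (phi v)) = f (phi v)).
    { apply derive_pt_eq_0, is_derive_Reals, Uder. }
    cbv beta in Hr. rewrite E in Hr. apply Hr.
    pose proof (f_int_pos kappa (phi v) Hk0 Hk1). unfold f. lra. }
  assert (Hc2 : forall t, Rabs t < delta -> cos (psi t) ^ 2 = 1 - kappa ^ 2 * sin (phi t) ^ 2).
  { intros t Ht. pose proof (sin2_cos2 (psi t)) as Hsc. unfold Rsqr in Hsc.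
    rewrite Hsin in Hsc by auto. nra. }
  assert (Hs2 : forall t, sin t ^ 2 <= 1).
  { intros t. pose proof (sin2_cos2 t). unfold Rsqr in H. pose proof (pow2_ge_0 (cos t)). nra. }
  assert (Hpos2 : forall y, 0 < 1 - kappa ^ 2 * sin y ^ 2).
  { intros y. pose proof (Hs2 y). pose proof (pow2_ge_0 (sin y)).
    assert (kappa ^ 2 < 1) by nra. nra. }
  assert (Hcc : forall s, Rabs s < delta -> continuity_pt (fun s => cos (psi s)) s).
  { intros s Hs. apply continuity_pt_filterlim.
    exact (continuous_comp psi cos s (Hcont s Hs) (continuous_cos _)). }
  assert (Hcpos : forall t, Rabs t < delta -> 0 < cos (psi t)).
  { assert (Hnz : forall t, Rabs t < delta -> cos (psi t) <> 0).
    { intros t Ht H0. pose proof (Hc2 t Ht). rewrite H0 in H. pose proof (Hpos2 (phi t)). 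
      simpl in H. lra. }
    intros t Ht. pose proof (Hnz t Ht) as Hne.
    destruct (Rlt_or_le 0 (cos (psi t))) as [|Hle]; auto.
    assert (Hlt : cos (psi t) < 0) by lra. exfalso.
    pose proof (Rle_abs t). pose proof (Rle_abs (-t)). rewrite Rabs_Ropp in *.
    assert (Hc0 : cos (psi 0) = 1) by (rewrite Hpsi0; apply cos_0).
    destruct (Rlt_or_le 0 t) as [Htp|Htn].
    - destruct (IVT_interv (fun s => - cos (psi s)) 0 t) as [z [Hz1 Hz2]].
      + intros a Ha. apply continuity_pt_opp. apply Hcc. apply Rabs_def1; lra.
      + auto.
      + lra.
      + lra.
      + apply (Hnz z); [apply Rabs_def1; lra| lra].
    - assert (t < 0) by (destruct Htn; auto; subst; lra).
      destruct (IVT_interv (fun s => cos (psi s)) t 0) as [z [Hz1 Hz2]].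
      + intros a Ha. apply Hcc. apply Rabs_def1; lra.
      + auto.
      + lra.
      + lra.
      + apply (Hnz z); [apply Rabs_def1; lra| lra]. }
  set (D := fun y => sqrt (1 - kappa ^ 2 * sin y ^ 2)).
  assert (Hloc : locally v (fun t => D (phi t) = d t)).
  { exists (mkposreal eps Heps). intros t Ht.
    change (Rabs (t - v) < eps) in Ht.
    assert (Rabs t < delta).
    { apply Hin. apply Rabs_def2 in Ht. unfold lb, ub; lra. }
    unfold D, d. rewrite <- Hc2 by auto. apply sqrt_pow2. left; apply Hcpos; auto. }
  set (y := phi v).
  set (L := 1 / f y * (- (kappa ^ 2 * sin y * cos y) / D y)).
  assert (HD : is_derive D y (- (kappa ^ 2 * sin y * cos y) / D y)).
  { unfold D. pose proof (Hpos2 y). auto_derive; [lra|]. 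
    match goal with |- context [sqrt (1 + - ?e)] => replace (1 + - e) with (1 - kappa^2 * sin y^2) by ring end. field. apply Rgt_not_eq, sqrt_lt_R0; auto. }
  assert (Hdd : is_derive d v L).
  { apply (is_derive_ext_loc _ _ _ _ Hloc).
    apply (is_derive_comp D phi v _ _ HD). apply is_derive_Reals, Hphid. }
  split; [exists L; exact Hdd|].
  rewrite (is_derive_unique _ _ _ Hdd).
  assert (Hdv : d v = D y).
  { symmetry. apply (locally_singleton _ _ Hloc). }
  rewrite Hdv.
  pose proof (ks_bnd kappa y Hk0 Hk1) as Hb. apply Rabs_def2 in Hb.
  set (s := sin y) in *. set (c := cos y) in *.
  assert (Hsc : c ^ 2 = 1 - s ^ 2).
  { pose proof (sin2_cos2 y). unfold Rsqr in H. fold s c in H. simpl. lra. }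
  set (A := sqrt (1 - kappa * s)). set (B := sqrt (1 + kappa * s)).
  assert (HA : 0 < A) by (apply sqrt_lt_R0; lra).
  assert (HB : 0 < B) by (apply sqrt_lt_R0; lra).
  assert (HA2 : A ^ 2 = 1 - kappa * s) by (apply pow2_sqrt; lra).
  assert (HB2 : B ^ 2 = 1 + kappa * s) by (apply pow2_sqrt; lra).
  assert (HAB : D y = A * B).
  { unfold D, A, B. fold s. rewrite <- sqrt_mult by lra. f_equal. ring. }
  assert (Hf : f y = (/ A + / B) / 2) by reflexivity.
  assert (Hl : lambda ^ 2 = 1 - kappa ^ 2).
  { unfold lambda. apply pow2_sqrt. assert (kappa ^ 2 < 1) by nra. lra. }
  unfold L. rewrite Hf, HAB, Hl.
  replace (1 / ((/ A + / B) / 2) * (- (kappa ^ 2 * s * c) / (A * B)))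
    with (- (2 * kappa ^ 2 * s * c) / (A + B)) by (field; lra).
  assert (HS : (A + B) ^ 2 = 2 + 2 * (A * B)) by nra.
  assert (HP : (A * B) ^ 2 = 1 - kappa ^ 2 * s ^ 2).
  { rewrite Rpow_mult_distr, HA2, HB2. ring. }
  apply Rmult_eq_reg_r with ((A + B) ^ 2); [|nra].
  replace ((- (2 * kappa ^ 2 * s * c) / (A + B)) ^ 2 * (A + B) ^ 2)
    with (4 * kappa ^ 4 * s ^ 2 * c ^ 2) by (field; lra).
  rewrite HS.
  replace (2 * (1 - A * B) * ((A * B) ^ 2 - (1 - kappa ^ 2)) * (2 + 2 * (A * B)))
    with (4 * (1 - (A * B) ^ 2) * ((A * B) ^ 2 - (1 - kappa ^ 2))) by ring.
  rewrite HP, Hsc. ring.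
Qed.
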